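(* Let $J=[0,+\infty)$ and let $A\colon J\to\mathcal{L}(\mathbb{R}^n)$ be of locally bounded variation on $J$ such that $I-\Delta^{-}A(t)$ is invertible for all $t\in(0,+\infty)$ and $I+\Delta^{+}A(t)$ is invertible for all $t\in J$. Let $U$ be the transition matrix of $\frac{dx}{d\tau}=D[A(t)x]$. Then the trivial solution of this equation is uniformly asymptotically stable if and only if there exist constants $\alpha,K>0$ such that $\|U(t,s_0)\|\le Ke^{-\alpha(t-s_0)}$ for all $t\ge s_0\ge 0$.
   Context: Here $\Delta^{+}A(t)=A(t^+)-A(t)$, $\Delta^{-}A(t)=A(t)-A(t^-)$. Integrals $\int_a^b \mathrm{d}[A(s)]x(s)$ are Perron–Stieltjes (Kurzweil–Stieltjes) integrals. A solution of $\frac{dx}{d\tau}=D[A(t)x]$ is a function $x$ with $x(b)-x(a)=\int_a^b\mathrm{d}[A(s)]x(s)$ for all $a,b$ in its interval of definition. The transition matrix $U\colon J\times J\to\mathcal{L}(\mathbb{R}^n)$ is the unique matrix function with $U(t,s)=I+\int_s^t\mathrm{d}[A(r)]U(r,s)$; the unique solution with $x(s_0)=x_0$ is $x(t,s_0,x_0)=U(t,s_0)x_0$ for $t\ge s_0$. The trivial solution is uniformly stable if for every $\varepsilon>0$ there is $\delta=\delta(\varepsilon)>0$ such that for all $s_0\ge0$, $\|x_0\|<\delta$ implies $\|x(t,s_0,x_0)\|<\varepsilon$ for all $t\ge s_0$. It is uniformly asymptotically stable if it is uniformly stable and there exists $\delta_0>0$ such that for each $\varepsilon>0$ there is $T=T(\varepsilon)\ge0$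 such that for all $s_0\ge0$ and $x_0$ with $\|x_0\|<\delta_0$, $\|x(t,s_0,x_0)\|<\varepsilon$ for all $t\ge s_0+T(\varepsilon)$. *)

(* Defs.v *)
From HB Require Import structures.
From mathcomp Require Import all_boot all_order all_algebra.
From mathcomp Require Import all_classical all_reals.
From mathcomp Require Import all_analysis.
Set Implicit Arguments. Unset Strict Implicit. Unset Printing Implicit Defensive.
Import Order.TTheory GRing.Theory Num.Theory.
Local Open Scope ring_scope.

Section KS.
Variable R : realType.

(* max-entry norm on (rectangular) matrices; for column vectors this is the
   sup norm on R^n.  All norms on finite-dimensional spaces are equivalent. *)
Definition mxnorm (p q : nat) (M : 'M[R]_(p, q)) : R :=
  \big[Num.max/0]_(i < p) \big[Num.max/0]_(j < q) `|M i j|.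

Definition tagged_div (a b : R) (k : nat) (al ta : nat -> R) : Prop :=
  al 0%N = a /\ al k = b /\
  forall j, (j < k)%N -> al j < al j.+1 /\ al j <= ta j <= al j.+1.

Definition delta_fine (delta : R -> R) (k : nat) (al ta : nat -> R) : Prop :=
  forall j, (j < k)%N ->
    ta j - delta (ta j) < al j /\ al j.+1 < ta j + delta (ta j).

Definition KS_sum (n m : nat) (A : R -> 'M[R]_n) (X : R -> 'M[R]_(n, m))
  (k : nat) (al ta : nat -> R) : 'M[R]_(n, m) :=
  \sum_(j < k) ((A (al j.+1) - A (al j)) *m X (ta j)).

Definition KS_integral (n m : nat) (a b : R) (A : R -> 'M[R]_n)
  (X : R -> 'M[R]_(n, m)) (I : 'M[R]_(n, m)) : Prop :=
  forall eps : R, 0 < eps ->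
    exists delta : R -> R, (forall t, 0 < delta t) /\
      forall k al ta, tagged_div a b k al ta -> delta_fine delta k al ta ->
        mxnorm (KS_sum A X k al ta - I) < eps.

Definition KS_int_eq (n m : nat) (a b : R) (A : R -> 'M[R]_n)
  (X : R -> 'M[R]_(n, m)) (I : 'M[R]_(n, m)) : Prop :=
  [/\ a < b -> KS_integral a b A X I,
      a = b -> I = 0 &
      b < a -> KS_integral b a A X (- I)].

Definition locally_BV_J (n : nat) (A : R -> 'M[R]_n) : Prop :=
  forall a b : R, 0 <= a -> a < b ->
    exists M : R, forall k (al : nat -> R),
      tagged_div a b k al al ->
      \sum_(j < k) mxnorm (A (al j.+1) - A (al j)) <= M.

Definition right_limit (n : nat) (A : R -> 'M[R]_n) (t : R) (L : 'M[R]_n) :=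
  forall eps : R, 0 < eps -> exists d : R, 0 < d /\
    forall s, t < s < t + d -> mxnorm (A s - L) < eps.

Definition left_limit (n : nat) (A : R -> 'M[R]_n) (t : R) (L : 'M[R]_n) :=
  forall eps : R, 0 < eps -> exists d : R, 0 < d /\
    forall s, t - d < s < t -> mxnorm (A s - L) < eps.

Definition transition_matrix (n : nat) (A : R -> 'M[R]_n)
  (U : R -> R -> 'M[R]_n) : Prop :=
  forall t s : R, 0 <= t -> 0 <= s ->
    KS_int_eq s t A (fun r => U r s) (U t s - 1%:M).

Definition sol (n : nat) (U : R -> R -> 'M[R]_n) (t s0 : R) (x0 : 'cV[R]_n)
  : 'cV[R]_n := U t s0 *m x0.

Definition unif_stable (n : nat) (U : R -> R -> 'M[R]_n) : Prop :=
  forall eps : R, 0 < eps -> exists delta : R, 0 < delta /\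
    forall (s0 : R) (x0 : 'cV[R]_n), 0 <= s0 -> mxnorm x0 < delta ->
      forall t, s0 <= t -> mxnorm (sol U t s0 x0) < eps.

Definition unif_asymp_stable (n : nat) (U : R -> R -> 'M[R]_n) : Prop :=
  unif_stable U /\
  exists delta0 : R, 0 < delta0 /\
    forall eps : R, 0 < eps -> exists T : R, 0 <= T /\
      forall (s0 : R) (x0 : 'cV[R]_n), 0 <= s0 -> mxnorm x0 < delta0 ->
        forall t, s0 + T <= t -> mxnorm (sol U t s0 x0) < eps.

End KS.

(* Main.v *)
Require Import Defs.
From HB Require Import structures.
From mathcomp Require Import all_boot all_order all_algebra.
From mathcomp Require Import all_classical all_reals.
From mathcomp Require Import all_analysis.
From mathcomp Require Import ring lra.
Import Order.TTheory GRing.Theory Num.Theory.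
Local Open Scope ring_scope.
Set Implicit Arguments. Unset Strict Implicit. Unset Printing Implicit Defensive.
Section Norms.
Variable R : realType.

Lemma mxnorm_ge0 p q (M : 'M[R]_(p,q)) : 0 <= mxnorm M.
Proof.
rewrite /mxnorm; elim/big_ind: _ => //; first by move=> x y hx hy; rewrite le_max hx.
move=> i _; elim/big_ind: _ => //; first by move=> x y hx hy; rewrite le_max hx.
Qed.

Lemma mxnorm_le p q (M : 'M[R]_(p,q)) c :
  0 <= c -> (forall i j, `|M i j| <= c) -> mxnorm M <= c.
Proof.
move=> c0 h; rewrite /mxnorm; elim/big_ind: _ => //.
  by move=> x y hx hy; rewrite ge_max hx hy.
move=> i _; elim/big_ind: _ => //.
by move=> x y hx hy; rewrite ge_max hx hy.
Qed.

Lemma le_mxnorm p q (M : 'M[R]_(p,q)) i j : `|M i j| <= mxnorm M.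
Proof.
rewrite /mxnorm (bigD1 i) //= le_max; apply/orP; left.
by rewrite (bigD1 j) //= le_max lexx.
Qed.

Lemma mxnormD p q (M N : 'M[R]_(p,q)) : mxnorm (M + N) <= mxnorm M + mxnorm N.
Proof.
apply: mxnorm_le; first by rewrite addr_ge0 // mxnorm_ge0.
move=> i j; rewrite mxE; apply: le_trans (ler_normD _ _) _.
by rewrite lerD // le_mxnorm.
Qed.

Lemma mxnormN p q (M : 'M[R]_(p,q)) : mxnorm (- M) = mxnorm M.
Proof.
apply/eqP; rewrite eq_le; apply/andP; split; apply: mxnorm_le; rewrite ?mxnorm_ge0 //.
  by move=> i j; rewrite mxE normrN le_mxnorm.
move=> i j; have := le_mxnorm (- M) i j; by rewrite mxE normrN.
Qed.

Lemma mxnormB p q (M N : 'M[R]_(p,q)) : mxnorm (M - N) <= mxnorm M + mxnorm N.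
Proof. by rewrite -(mxnormN N) mxnormD. Qed.

Lemma mxnormM p q r (M : 'M[R]_(p,q)) (N : 'M[R]_(q,r)) :
  mxnorm (M *m N) <= q%:R * mxnorm M * mxnorm N.
Proof.
apply: mxnorm_le; first by rewrite !mulr_ge0 ?mxnorm_ge0.
move=> i j; rewrite mxE; apply: le_trans (ler_norm_sum _ _ _) _.
apply: le_trans (_ : \sum_(k < q) (mxnorm M * mxnorm N) <= _).
  apply: ler_sum => k _; rewrite normrM ler_pM ?le_mxnorm //.
by rewrite sumr_const card_ord -mulrA mulr_natl.
Qed.

Lemma mxnorm0 p q : mxnorm (0 : 'M[R]_(p,q)) = 0.
Proof.
apply/eqP; rewrite eq_le mxnorm_ge0 andbT; apply: mxnorm_le => // i j.
by rewrite mxE normr0.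
Qed.

Lemma mxnorm_sum p q k (F : 'I_k -> 'M[R]_(p,q)) :
  mxnorm (\sum_(j < k) F j) <= \sum_(j < k) mxnorm (F j).
Proof.
elim/big_rec2: _; first by rewrite mxnorm0.
by move=> j y1 y2 _ h; apply: le_trans (mxnormD _ _) _; rewrite lerD2l.
Qed.

Lemma mxnorm_eq0 p q (M : 'M[R]_(p,q)) : mxnorm M = 0 -> M = 0.
Proof.
move=> h; apply/matrixP => i j; rewrite mxE; apply/eqP; rewrite -normr_le0 -h.
exact: le_mxnorm.
Qed.

Lemma mxnorm_small p q (M : 'M[R]_(p,q)) : (forall e, 0 < e -> mxnorm M <= e) -> M = 0.
Proof.
move=> h; apply: mxnorm_eq0; apply/eqP; rewrite eq_le mxnorm_ge0 andbT.
apply/ler_addgt0Pr => e e0; rewrite add0r; exact: h.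
Qed.

End Norms.
Section Div.
Variable R : realType.

Definition catf (k1 : nat) (f g : nat -> R) (j : nat) : R :=
  if (j < k1)%N then f j else g (j - k1)%N.

Definition dsum (V : zmodType) (F : R -> R -> R -> V) k (al ta : nat -> R) : V :=
  \sum_(j < k) F (al j) (al j.+1) (ta j).

Lemma catf_lt k1 f g j : (j < k1)%N -> catf k1 f g j = f j.
Proof. by rewrite /catf => ->. Qed.

Lemma catf_ge k1 f g i : catf k1 f g (k1 + i)%N = g i.
Proof. by rewrite /catf ltnNge leq_addr /= addKn. Qed.

Lemma catf_S k1 (f g : nat -> R) j : (j < k1)%N -> f k1 = g 0%N ->
  catf k1 f g j.+1 = f j.+1.
Proof.
move=> jk e; rewrite /catf; case: ltnP => // h.
have -> : j.+1 = k1 by apply/eqP; rewrite eqn_leq jk h.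
by rewrite subnn e.
Qed.

Lemma catf_S2 k1 (f g : nat -> R) i : catf k1 f g (k1 + i)%N.+1 = g i.+1.
Proof. by rewrite -addnS catf_ge. Qed.

Lemma cat_forall (P : R -> R -> R -> Prop) k1 k2 al1 ta1 al2 ta2 :
  al1 k1 = al2 0%N ->
  (forall j, (j < k1)%N -> P (al1 j) (al1 j.+1) (ta1 j)) ->
  (forall j, (j < k2)%N -> P (al2 j) (al2 j.+1) (ta2 j)) ->
  forall j, (j < k1 + k2)%N ->
    P (catf k1 al1 al2 j) (catf k1 al1 al2 j.+1) (catf k1 ta1 ta2 j).
Proof.
move=> e h1 h2 j jk; case: (ltnP j k1) => jk1.
  by rewrite (catf_S jk1 e) !(catf_lt _ _ jk1); apply: h1.
have [i hi] : exists i, j = (k1 + i)%N by exists (j - k1)%N; rewrite subnKC.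
subst j; rewrite catf_S2 !catf_ge; apply: h2; by rewrite -(ltn_add2l k1).
Qed.

Lemma dsum_cat (V : zmodType) (F : R -> R -> R -> V) k1 k2 al1 ta1 al2 ta2 :
  al1 k1 = al2 0%N ->
  dsum F (k1 + k2)%N (catf k1 al1 al2) (catf k1 ta1 ta2) =
  dsum F k1 al1 ta1 + dsum F k2 al2 ta2.
Proof.
move=> e; rewrite /dsum big_split_ord /=; congr (_ + _); apply: eq_bigr => i _ /=.
  by rewrite (catf_S (ltn_ord i) e) !(catf_lt _ _ (ltn_ord i)).
by rewrite catf_S2 !catf_ge.
Qed.

Lemma tagged_div_cat a b c k1 k2 al1 ta1 al2 ta2 :
  tagged_div a b k1 al1 ta1 -> tagged_div b c k2 al2 ta2 ->
  tagged_div a c (k1 + k2)%N (catf k1 al1 al2) (catf k1 ta1 ta2).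
Proof.
move=> [h10 [h1k h1]] [h20 [h2k h2]]; split; last split.
- rewrite /catf; case: ifP => // /negbT; rewrite -leqNgt leqn0 => /eqP k10.
  by rewrite k10 subnn h20 -h1k k10 h10.
- by rewrite catf_ge.
- apply: (cat_forall (P := fun x y t => x < y /\ x <= t <= y)) => //.
  by rewrite h1k h20.
Qed.

Lemma delta_fine_cat (delta : R -> R) k1 k2 al1 ta1 al2 ta2 :
  al1 k1 = al2 0%N ->
  delta_fine delta k1 al1 ta1 -> delta_fine delta k2 al2 ta2 ->
  delta_fine delta (k1 + k2)%N (catf k1 al1 al2) (catf k1 ta1 ta2).
Proof.
move=> e h1 h2; apply: (cat_forall (P := fun x y t => t - delta t < x /\ y < t + delta t)) => //.
Qed.

Definition one_al (a b : R) (j : nat) : R := if j is 0 then a else b.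

Lemma tagged_div_one a b t : a < b -> a <= t <= b ->
  tagged_div a b 1 (one_al a b) (fun _ => t).
Proof. by move=> ab tab; split => //; split => // j; rewrite ltnS leqn0 => /eqP ->. Qed.

Lemma delta_fine_one (delta : R -> R) a b t : t - delta t < a -> b < t + delta t ->
  delta_fine delta 1 (one_al a b) (fun _ => t).
Proof. by move=> h1 h2 j; rewrite ltnS leqn0 => /eqP ->. Qed.

Lemma dsum_one (V : zmodType) (F : R -> R -> R -> V) a b t :
  dsum F 1 (one_al a b) (fun _ => t) = F a b t.
Proof. by rewrite /dsum big_ord1. Qed.

Lemma tagged_div0 (a : R) ta : tagged_div a a 0 (fun _ => a) ta.
Proof. by split => //; split. Qed.

Lemma dsum0 (V : zmodType) (F : R -> R -> R -> V) (al ta : nat -> R) : dsum F 0 al ta = 0.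
Proof. by rewrite /dsum big_ord0. Qed.

Lemma tagged_div_le (a b : R) k al ta : tagged_div a b k al ta -> a <= b.
Proof.
move=> [h0 [hk h]]; rewrite -h0 -hk; elim: k {hk} h => // k IH h.
apply: le_trans (IH _) _ => [j jk|]; first by apply: h; rewrite ltnW.
by have [/ltW] := h k (ltnSn k).
Qed.

Lemma tagged_div_mono (a b : R) k al ta : tagged_div a b k al ta ->
  forall i j, (i <= j <= k)%N -> al i <= al j.
Proof.
move=> [h0 [hk h]] i j /andP [ij jk].
elim: j ij jk => [|j IH]; first by rewrite leqn0 => /eqP ->.
rewrite leq_eqVlt => /orP [/eqP -> //|]; rewrite ltnS => ij jk.
apply: le_trans (IH ij (ltnW jk)) _; by have [/ltW] := h j jk.
Qed.

Lemma cousin (delta : R -> R) a b : (forall t, 0 < delta t) -> a < b ->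
  exists k al ta, tagged_div a b k al ta /\ delta_fine delta k al ta.
Proof.
move=> dpos ab.
pose P x := exists k al ta, tagged_div a x k al ta /\ delta_fine delta k al ta.
pose S : set R := fun x => a <= x <= b /\ P x.
have Sa : S a.
  split; first by rewrite lexx ltW.
  by exists 0%N, (fun _ => a), (fun _ => a); split; [exact: tagged_div0|] => j.
have hS : has_sup S by split; [exists a | exists b => x [/andP [_ ->]]].
set c := sup S.
have ac : a <= c by apply: sup_upper_bound.
have cb : c <= b by apply: ge_sup; [exists a| move=> x [/andP [_ ->]]].
have [x [/andP [ax xb] [k [al [ta [hd hf]]]]] cx] := sup_adherent (dpos c) hS.
have xc : x <= c by apply: sup_upper_bound => //; split => //; [rewrite ax xb | exists k, al, ta].
have [xb'|] := eqVneq x b; first by rewrite -xb'; exists k, al, ta.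
move=> xnb; have {xnb}xb : x < b by rewrite lt_neqAle xnb xb.
set y := Num.min b (c + delta c / 2).
have d2 : 0 < delta c / 2 by rewrite divr_gt0.
have xy : x < y by rewrite lt_min xb /=; apply: le_lt_trans xc _; rewrite ltrDl.
have Py : P y.
  exists (k + 1)%N, (catf k al (one_al x y)), (catf k ta (fun _ => c)); split.
    apply: tagged_div_cat hd _; apply: tagged_div_one => //.
    by rewrite xc /= le_min cb lerDl ltW.
  apply: delta_fine_cat hf _; first by have [_ []] := hd.
  apply: delta_fine_one => //.
  have ymin : y <= c + delta c / 2 by rewrite /y ge_min lexx orbT.
  apply: le_lt_trans ymin _; rewrite ltrD2l ltr_pdivrMr // ltr_pMr // ltr1n //=.

have yc : y <= c.
  apply: sup_upper_bound => //; split => //.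
  by rewrite (ltW (le_lt_trans ax xy)) /= ge_min lexx.
have yb : y = b.
  move: yc; rewrite /y ge_min => /orP [bc|]; first by apply/eqP; rewrite eq_le ge_min lexx /= le_min lexx /= (le_trans bc) // lerDl ltW.
  by rewrite gerDl leNgt d2.
by rewrite -yb.
Qed.

End Div.
Section Integ.
Variable R : realType.
Variable n : nat.
Implicit Types (A : R -> 'M[R]_n).

Lemma zsub4 (V : zmodType) (x y I J : V) : (x - y) - (I - J) = (x - I) - (y - J).
Proof. by rewrite !opprB !addrA [x - y + J]addrAC [x - I + J]addrAC [RHS]addrAC. Qed.
Lemma zsplit (V : zmodType) (q p I1 I2 : V) : p - (I1 - I2) = (q + p - I1) - (q - I2).
Proof. by rewrite !opprB [q + p]addrC -!addrA; congr (_ + _); rewrite addrCA [I2 - q]addrC addNKr addrC. Qed.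

Lemma KS_sumE m A (X : R -> 'M[R]_(n,m)) k al ta :
  KS_sum A X k al ta = dsum (fun a b t => (A b - A a) *m X t) k al ta.
Proof. by []. Qed.

Lemma fine_mono (d d' : R -> R) k al ta : (forall t, d' t <= d t) ->
  delta_fine d' k al ta -> delta_fine d k al ta.
Proof.
move=> h hf j jk; have [h1 h2] := hf j jk; split.
  by apply: le_lt_trans h1; rewrite lerD2l lerN2.
by apply: lt_le_trans h2 _; rewrite lerD2l.
Qed.

Lemma min_pos (d1 d2 : R -> R) : (forall t, 0 < d1 t) -> (forall t, 0 < d2 t) ->
  forall t, 0 < Num.min (d1 t) (d2 t).
Proof. by move=> h1 h2 t; rewrite lt_min h1 h2. Qed.

Lemma KS_sub m (a b : R) A (X Y : R -> 'M[R]_(n,m)) I J :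
  KS_integral a b A X I -> KS_integral a b A Y J ->
  KS_integral a b A (fun r => X r - Y r) (I - J).
Proof.
move=> hX hY e e0.
have e2 : 0 < e / 2 by rewrite divr_gt0.
have [d1 [d1p h1]] := hX _ e2; have [d2 [d2p h2]] := hY _ e2.
exists (fun t => Num.min (d1 t) (d2 t)); split; first exact: min_pos.
move=> k al ta hd hf.
have f1 : delta_fine d1 k al ta by apply: fine_mono hf => t; rewrite ge_min lexx.
have f2 : delta_fine d2 k al ta by apply: fine_mono hf => t; rewrite ge_min lexx orbT.
have -> : KS_sum A (fun r => X r - Y r) k al ta - (I - J) =
  (KS_sum A X k al ta - I) - (KS_sum A Y k al ta - J).
  rewrite -zsub4; congr (_ - _); rewrite /KS_sum -sumrB.
  by apply: eq_bigr => j _; rewrite mulmxBr.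
apply: le_lt_trans (mxnormB _ _) _.
by rewrite (splitr e) ltrD // ?h1 ?h2.
Qed.

Lemma KS_mulr m p (a b : R) A (X : R -> 'M[R]_(n,m)) (C : 'M[R]_(m,p)) I :
  KS_integral a b A X I ->
  KS_integral a b A (fun r => X r *m C) (I *m C).
Proof.
move=> hX e e0.
set c := m%:R * mxnorm C + 1.
have c0 : 0 < c by rewrite ltr_wpDl // mulr_ge0 // mxnorm_ge0.
have [d [dp h]] := hX (e / c) (divr_gt0 e0 c0).
exists d; split => // k al ta hd hf.
have -> : KS_sum A (fun r => X r *m C) k al ta - I *m C = (KS_sum A X k al ta - I) *m C.
  by rewrite mulmxBl /KS_sum mulmx_suml; under [in RHS]eq_bigr do rewrite -mulmxA.
apply: le_lt_trans (mxnormM _ _) _.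
have hh := h k al ta hd hf.
apply: le_lt_trans (_ : _ <= e / c * (m%:R * mxnorm C)) _.
  rewrite [X in X <= _]mulrAC [X in X <= _]mulrC ler_wpM2r ?mulr_ge0 ?mxnorm_ge0 //.
  exact: ltW.
rewrite -mulrA gtr_pMr // mulrC ltr_pdivrMr // mul1r /c ltrDl ltr01 //.
Qed.

Lemma KS_split m (a c b : R) A (X : R -> 'M[R]_(n,m)) I1 I2 :
  a < c -> c < b ->
  KS_integral a b A X I1 -> KS_integral a c A X I2 ->
  KS_integral c b A X (I1 - I2).
Proof.
move=> ac cb h1 h2 e e0.
have e2 : 0 < e / 2 by rewrite divr_gt0.
have [d1 [d1p g1]] := h1 _ e2; have [d2 [d2p g2]] := h2 _ e2.
set d := fun t => Num.min (d1 t) (d2 t).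
have dp : forall t, 0 < d t by exact: min_pos.
exists d; split => // k al ta hd hf.
have [k' [al' [ta' [hd' hf']]]] := cousin dp ac.
have f1 : delta_fine d1 k' al' ta' by apply: fine_mono hf' => t; rewrite ge_min lexx.
have f2 : delta_fine d2 k' al' ta' by apply: fine_mono hf' => t; rewrite ge_min lexx orbT.
have e' : al' k' = al 0%N by have [_ [-> _]] := hd'; have [-> _] := hd.
have hc := tagged_div_cat hd' hd.
have fc : delta_fine d1 (k' + k)%N (catf k' al' al) (catf k' ta' ta).
  by apply: fine_mono (delta_fine_cat e' hf' hf) => t; rewrite ge_min lexx.
have := g1 _ _ _ hc fc; rewrite KS_sumE dsum_cat // -!KS_sumE => hh.
have hh2 := g2 _ _ _ hd' f2.
have -> : KS_sum A X k al ta - (I1 - I2) =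
   (KS_sum A X k' al' ta' + KS_sum A X k al ta - I1) - (KS_sum A X k' al' ta' - I2).
  exact: zsplit.
apply: le_lt_trans (mxnormB _ _) _.
by rewrite (splitr e) ltrD.
Qed.

End Integ.
Section BV.
Variable R : realType.
Variable n : nat.
Variable A : R -> 'M[R]_n.

Definition vsum k (al : nat -> R) := dsum (fun a b (_ : R) => mxnorm (A b - A a)) k al al.

Lemma vsum_ge0 k al : 0 <= vsum k al.
Proof. by apply: sumr_ge0 => j _; apply: mxnorm_ge0. Qed.

Lemma big_N (M e : R) : 0 < e -> exists N : nat, M < N%:R * e.
Proof.
move=> e0; exists (Num.Def.archi_bound (`|M| / e)).
rewrite -ltr_pdivrMr //; apply: le_lt_trans (archi_boundP _); last by rewrite divr_ge0 // ltW.
by rewrite ler_pM2r ?invr_gt0 // ler_norm.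
Qed.

Lemma vsum_cat k1 k2 al1 al2 : al1 k1 = al2 0%N ->
  vsum (k1 + k2)%N (catf k1 al1 al2) = vsum k1 al1 + vsum k2 al2.
Proof. by move=> e; rewrite /vsum dsum_cat. Qed.

Lemma vsum_one a b : vsum 1 (one_al a b) = mxnorm (A b - A a).
Proof.
rewrite /vsum /dsum big_ord1 /=; done.
Qed.

Lemma div_end a b k (al : nat -> R) : tagged_div a b k al al -> al k = b.
Proof. by case=> _ []. Qed.

Lemma div_start a b k (al : nat -> R) : tagged_div a b k al al -> al 0%N = a.
Proof. by case. Qed.

Lemma tagged_div_one' (a b : R) : a < b -> tagged_div a b 1 (one_al a b) (one_al a b).
Proof. by move=> ab; split => //; split => // j; rewrite ltnS leqn0 => /eqP ->; rewrite /= lexx ltW. Qed.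

Hypothesis BV : locally_BV_J A.

Lemma right_var (t e : R) : 0 <= t -> 0 < e -> exists t1, t < t1 /\
  forall u y, t < u -> u < y -> y <= t1 -> forall k al, tagged_div u y k al al -> vsum k al < e.
Proof.
move=> t0 e0.
case: (pselect (exists t1, t < t1 /\
  forall u y, t < u -> u < y -> y <= t1 -> forall k al, tagged_div u y k al al -> vsum k al < e)) => // H.
have H' : forall t1, t < t1 -> exists u y k al, [/\ t < u, u < y, y <= t1,
    tagged_div u y k al al & e <= vsum k al].
  move=> t1 tt1; apply: contrapT => nh; apply: H; exists t1; split => // u y tu uy yt1 k al hd.
  rewrite ltNge; apply/negP => hle; apply: nh; by exists u, y, k, al.
have claim : forall N : nat, forall t1, t < t1 -> exists u k al,
    [/\ t < u, u < t1, tagged_div u t1 k al al & N%:R * e <= vsum k al].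
  elim=> [|N IH] t1 tt1.
    exists ((t + t1) / 2), 1%N, (one_al ((t + t1) / 2) t1); split.
    - by rewrite midf_lt.
    - by rewrite midf_lt.
    - by apply: tagged_div_one'; rewrite midf_lt.
    - by rewrite mul0r vsum_ge0.
  have tm : t < (t + t1) / 2 by rewrite midf_lt.
  have mt : (t + t1) / 2 < t1 by rewrite midf_lt.
  have [u [y [k1 [al1 [tu uy ym hd1 he1]]]]] := H' _ tm.
  have [u' [k0 [al0 [tu' u'u hd0 he0]]]] := IH u tu.
  have yt1 : y < t1 by apply: le_lt_trans mt.
  exists u', ((k0 + k1) + 1)%N, (catf (k0 + k1) (catf k0 al0 al1) (one_al y t1)); split => //.
  - by apply: lt_trans yt1; apply: lt_trans uy.
  - apply: tagged_div_cat (tagged_div_one' yt1).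
    exact: tagged_div_cat hd0 hd1.
  - rewrite vsum_cat; last by rewrite catf_ge (div_end hd1).
    rewrite vsum_cat; last by rewrite (div_end hd0) (div_start hd1).
    rewrite -addn1 natrD mulrDl mul1r -addrA lerD //.
    by apply: le_trans he1 _; rewrite lerDl vsum_ge0.
have tp1 : t < t + 1 by rewrite ltrDl ltr01.
have [M hM] := BV t0 tp1.
have [N hN] := big_N M e0.
have [u [k [al [tu _ hd hv]]]] := claim N (t + 1) tp1.
have hd2 := tagged_div_cat (tagged_div_one' tu) hd.
have : vsum _ (catf 1 (one_al t u) al) <= M := hM _ _ hd2.
rewrite vsum_cat; last by rewrite (div_start hd).
rewrite vsum_one => h.
have : N%:R * e <= M.
  apply: le_trans h; apply: le_trans hv _; by rewrite lerDr mxnorm_ge0.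
by rewrite leNgt hN.
Qed.

Lemma left_cauchy (t e : R) : 0 < t -> 0 < e -> exists t0, t0 < t /\
  forall u v, t0 < u -> u < v -> v < t -> mxnorm (A v - A u) < e.
Proof.
move=> t0 e0.
case: (pselect (exists t1, t1 < t /\
  forall u v, t1 < u -> u < v -> v < t -> mxnorm (A v - A u) < e)) => // H.
have H' : forall t1, t1 < t -> exists u v, [/\ t1 < u, u < v, v < t & e <= mxnorm (A v - A u)].
  move=> t1 tt1; apply: contrapT => nh; apply: H; exists t1; split => // u v tu uv vt.
  rewrite ltNge; apply/negP => hle; apply: nh; by exists u, v.
have claim : forall N : nat, forall t1, t1 < t -> exists v k al,
    [/\ t1 < v, v < t, tagged_div t1 v k al al & N%:R * e <= vsum k al].
  elim=> [|N IH] t1 tt1.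
    exists ((t1 + t) / 2), 1%N, (one_al t1 ((t1 + t) / 2)); split.
    - by rewrite midf_lt.
    - by rewrite midf_lt.
    - by apply: tagged_div_one'; rewrite midf_lt.
    - by rewrite mul0r vsum_ge0.
  have [u [v [tu uv vt he]]] := H' _ tt1.
  have [v' [k0 [al0 [vv' v't hd0 he0]]]] := IH v vt.
  exists v', (1 + 1 + k0)%N, (catf (1 + 1) (catf 1 (one_al t1 u) (one_al u v)) al0); split => //.
  - by apply: lt_trans vv'; apply: lt_trans uv.
  - apply: tagged_div_cat hd0.
    exact: tagged_div_cat (tagged_div_one' tu) (tagged_div_one' uv).
  - rewrite vsum_cat; last by rewrite catf_ge (div_start hd0).
    rewrite vsum_cat // !vsum_one.
    rewrite -addn1 natrD mulrDl mul1r addrC lerD //.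
    by apply: le_trans he _; rewrite lerDr mxnorm_ge0.
have th : 0 <= t / 2 by rewrite divr_ge0 // ltW.
have t2t : t / 2 < t by rewrite ltr_pdivrMr // ltr_pMr // ltr1n.
have [M hM] := BV th t2t.
have [N hN] := big_N M e0.
have [v [k [al [tv vt hd hv]]]] := claim N (t / 2) t2t.
have hd2 := tagged_div_cat hd (tagged_div_one' vt).
have : vsum _ (catf k al (one_al v t)) <= M := hM _ _ hd2.
rewrite vsum_cat; last by rewrite (div_end hd).
rewrite vsum_one => h.
have : N%:R * e <= M.
  apply: le_trans h; apply: le_trans hv _; by rewrite lerDl mxnorm_ge0.
by rewrite leNgt hN.
Qed.

End BV.
Section LL.
Variable R : realType.
Variable n : nat.
Variable A : R -> 'M[R]_n.
Hypothesis BV : locally_BV_J A.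

Lemma entry_diff (x y : R) i j : `|A y i j - A x i j| <= mxnorm (A y - A x).
Proof. by have := le_mxnorm (A y - A x) i j; rewrite !mxE. Qed.

Lemma left_limit_ex (t : R) : 0 < t -> exists L, left_limit A t L.
Proof.
move=> t0.
have LC := left_cauchy BV t0.
have close : forall e, 0 < e -> exists t1, t1 < t /\ forall x y, t1 < x < t -> t1 < y < t ->
    forall i j, `|A y i j - A x i j| < e.
  move=> e e0; have [t1 [t1t h]] := LC e e0; exists t1; split => // x y /andP [t1x xt] /andP [t1y yt] i j.
  case: (ltgtP x y) => [xy|yx|->]; last by rewrite subrr normr0.
  - by apply: le_lt_trans (entry_diff _ _ _ _) _; apply: h.
  - rewrite distrC; by apply: le_lt_trans (entry_diff _ _ _ _) _; apply: h.
pose S i j : set R := fun y => exists t1, t1 < t /\ forall x, t1 < x < t -> y <= A x i j.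
have key : forall e, 0 < e -> exists t1, t1 < t /\ forall x, t1 < x < t -> forall i j,
    `|sup (S i j) - A x i j| <= e.
  move=> e e0; have [t1 [t1t h]] := close e e0; exists t1; split => // x hx i j.
  have lb : S i j (A x i j - e).
    exists t1; split => // y hy.
    have := h x y hx hy i j; rewrite ltr_norml => /andP [h3 _]; lra.
  have ub : forall y, S i j y -> y <= A x i j + e.
    move=> y [t2 [t2t h2]].
    set z := (Num.max t1 t2 + t) / 2.
    have mt : Num.max t1 t2 < t by rewrite gt_max t1t t2t.
    have hz1 : Num.max t1 t2 < z by rewrite midf_lt.
    have hz2 : z < t by rewrite midf_lt.
    have hz : t1 < z < t by rewrite hz2 andbT; apply: le_lt_trans hz1; rewrite le_max lexx.
    have hz' : t2 < z < t by rewrite hz2 andbT; apply: le_lt_trans hz1; rewrite le_max lexx orbT.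
    apply: le_trans (h2 z hz') _.
    have := h x z hx hz i j; rewrite ltr_norml => /andP [_ h3]; lra.
  have hs : has_sup (S i j) by split; [exists (A x i j - e) | exists (A x i j + e)].
  have s1 : sup (S i j) <= A x i j + e by apply: ge_sup => //; exists (A x i j - e).
  have s2 : A x i j - e <= sup (S i j) by apply: sup_upper_bound.
  rewrite ler_norml; apply/andP; split; lra.
exists (\matrix_(i, j) sup (S i j)) => e e0.
have e2 : 0 < e / 2 by rewrite divr_gt0.
have [t1 [t1t h]] := key _ e2.
exists (t - t1); split; first by rewrite subr_gt0.
move=> s /andP [h1 h2].
apply: le_lt_trans (_ : mxnorm _ <= e / 2) _; last by rewrite ltr_pdivrMr // ltr_pMr // ltr1n.
apply: mxnorm_le; first exact: ltW.
move=> i j; rewrite !mxE distrC; apply: h.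
rewrite h2 andbT; lra.
Qed.

End LL.
Section Uniq.
Variable R : realType.
Variable n : nat.
Variable A : R -> 'M[R]_n.
Hypothesis BV : locally_BV_J A.
Hypothesis hL : forall t : R, 0 < t -> forall L : 'M[R]_n, left_limit A t L ->
     1%:M - (A t - L) \in unitmx.
Variable Z : R -> 'M[R]_n.
Variables r B0 : R.
Hypothesis r0 : 0 <= r.
Hypothesis Zr : Z r = 0.
Hypothesis Zint : forall u v, r <= u -> u < v -> KS_integral u v A Z (Z v - Z u).
Hypothesis Zb : forall t, r <= t -> mxnorm (Z t) <= B0.

Lemma zid1 (V : zmodType) (T a l b : V) : T - (a - l) = (T - (a - b)) + (l - b).
Proof. by rewrite -addrA; congr (_ + _); rewrite !opprB [RHS]addrC addrA addrNK. Qed.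

Lemma small_lin (x c : R) : 0 < c -> (forall e, 0 < e -> x <= e * c) -> x <= 0.
Proof.
move=> c0 h; apply/ler_addgt0Pr => e e0; rewrite add0r.
by have := h (e / c) (divr_gt0 e0 c0); rewrite divfK ?gt_eqF.
Qed.

Lemma div_pos_k a b k (al ta : nat -> R) : a < b -> tagged_div a b k al ta -> (0 < k)%N.
Proof.
move=> ab [h0 [hk _]]; case: k hk => // hk.
by move: ab; rewrite -h0 -hk ltxx.
Qed.

Lemma stepL ts : r < ts -> (forall u, r <= u -> u < ts -> Z u = 0) -> Z ts = 0.
Proof.
move=> rts hz.
have ts0 : 0 < ts by apply: le_lt_trans rts.
have [L hLL] := left_limit_ex BV ts0.
set M := 1%:M - (A ts - L).
have MZ : M *m Z ts = 0.
  apply: mxnorm_eq0; apply/eqP; rewrite eq_le mxnorm_ge0 andbT.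
  apply: (@small_lin _ (1 + n%:R * mxnorm (Z ts))); first by rewrite ltr_wpDr // ?mulr_ge0 ?mxnorm_ge0.
  move=> e e0.
  have [d [dp hd]] := @Zint r ts (lexx r) rts e e0.
  have [dl [dl0 hdl]] := hLL e e0.
  pose d' x := if x < ts then Num.min (d x) (ts - x) else Num.min (d x) dl.
  have d'p : forall x, 0 < d' x.
    by move=> x; rewrite /d'; case: ifP => h; rewrite lt_min dp //= ?subr_gt0.
  have [k [al [ta [hdiv hf]]]] := cousin d'p rts.
  have k0 := div_pos_k rts hdiv.
  case: k hdiv hf k0 => [|k'] hdiv hf k0; first by rewrite ltnn in k0.
  have d'd : forall x, d' x <= d x by move=> x; rewrite /d'; case: ifP => _; rewrite ge_min lexx.
  have hS := hd _ _ _ hdiv (fine_mono d'd hf).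
  have [hdiv0 [hdivk hdivj]] := hdiv.
  have mono := tagged_div_mono hdiv.
  have [lt_k /andP [tk1 tk2]] := hdivj k' (ltnSn k').
  have tats : ta k' = ts.
    apply/eqP; rewrite eq_le -hdivk tk2 /=; rewrite leNgt; apply/negP => tlt.
    have [_ ] := hf k' (ltnSn k'); rewrite /d' hdivk -hdivk tlt.
    move=> h1; have h2 : Num.min (d (ta k')) (al k'.+1 - ta k') <= al k'.+1 - ta k'.
      by rewrite ge_min lexx orbT.
    lra.
  have tb : forall j, (j < k')%N -> Z (ta j) = 0.
    move=> j jk; have [_ /andP [t1 t2]] := hdivj j (ltnW jk).
    apply: hz.
      by rewrite -hdiv0; apply: le_trans t1; apply: mono; rewrite leq0n /= ltnW // ltnW.
    apply: le_lt_trans t2 _; apply: le_lt_trans (mono j.+1 k' _) _; first by rewrite jk ltnW.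
    by rewrite -hdivk.
  have hsum : KS_sum A Z k'.+1 al ta = (A ts - A (al k')) *m Z ts.
    rewrite /KS_sum big_ord_recr /= big1 ?add0r => [|j _]; first by rewrite tats hdivk.
    by rewrite tb // mulmx0.
  have alk : ts - dl < al k' < ts.
    rewrite -hdivk lt_k andbT; have [h1 _] := hf k' (ltnSn k').
    move: h1; rewrite tats /d' ltxx hdivk => h1.
    have h2 : Num.min (d ts) dl <= dl by rewrite ge_min lexx orbT.
    lra.
  have hA := hdl _ alk.
  rewrite hsum Zr subr0 in hS.
  have -> : M *m Z ts = - ((A ts - A (al k')) *m Z ts - Z ts) + (L - A (al k')) *m Z ts.
    rewrite /M mulmxBl mul1mx opprB !mulmxBl.
    exact: zid1.
  apply: le_trans (mxnormD _ _) _; rewrite mxnormN mulrDr mulr1 lerD //; first exact: ltW.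
  apply: le_trans (mxnormM _ _) _.
  rewrite -mxnormN opprB mulrCA mulrA ler_wpM2r ?mxnorm_ge0 // ler_wpM2l // ltW //.
rewrite -(mulKmx (hL ts0 hLL) (Z ts)) -/M MZ mulmx0 //.
Qed.

Lemma stepR ts : r <= ts -> Z ts = 0 ->
  exists t1, ts < t1 /\ forall y, ts <= y -> y <= t1 -> Z y = 0.
Proof.
move=> rts Zts.
have ts0 : 0 <= ts by apply: le_trans rts.
set ev : R := (2 * (n%:R + 1))^-1.
have ev0 : 0 < ev by rewrite invr_gt0 mulr_gt0 // ltr_wpDl.
have nev : n%:R * ev <= 2^-1.
  rewrite /ev invfM mulrCA ler_piMr ?invr_ge0 ?ler0n //.
  by rewrite ler_pdivrMr ?ltr_wpDl // mul1r lerDl.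
have [t1 [tst1 hv]] := right_var BV ts0 ev0.
exists t1; split => //.
have half : forall B, 0 <= B -> (forall y, ts <= y -> y <= t1 -> mxnorm (Z y) <= B) ->
    forall y, ts <= y -> y <= t1 -> mxnorm (Z y) <= B / 2.
  move=> B B0' hB y tsy yt1.
  case: (eqVneq y ts) => [-> | yts]; first by rewrite Zts mxnorm0 divr_ge0.
  have tsy' : ts < y by rewrite lt_neqAle eq_sym yts tsy.
  apply/ler_addgt0Pr => e e0.
  have [d [dp hd]] := @Zint ts y rts tsy' e e0.
  pose d' x := if ts < x then Num.min (d x) (x - ts) else d x.
  have d'p : forall x, 0 < d' x.
    by move=> x; rewrite /d'; case: ifP => h; rewrite ?lt_min dp //= ?subr_gt0.
  have d'd : forall x, d' x <= d x by move=> x; rewrite /d'; case: ifP => _; rewrite ?ge_min lexx.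
  have [k [al [ta [hdiv hf]]]] := cousin d'p tsy'.
  have k0 := div_pos_k tsy' hdiv.
  case: k hdiv hf k0 => [|k'] hdiv hf k0; first by rewrite ltnn in k0.
  have hS := hd _ _ _ hdiv (fine_mono d'd hf).
  rewrite Zts subr0 in hS.
  have [hdiv0 [hdivk hdivj]] := hdiv.
  have mono := tagged_div_mono hdiv.
  have ta0 : ta 0%N = ts.
    have [lt0 /andP [t01 t02]] := hdivj 0%N (ltn0Sn k').
    apply/eqP; rewrite eq_le -{2}hdiv0 t01 andbT leNgt; apply/negP => tlt.
    have [h1 _] := hf 0%N (ltn0Sn k'); move: h1; rewrite /d' tlt hdiv0 => h1.
    have h2 : Num.min (d (ta 0%N)) (ta 0%N - ts) <= ta 0%N - ts by rewrite ge_min lexx orbT.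
    lra.
  have hsum : KS_sum A Z k'.+1 al ta =
      \sum_(j < k') (A (al j.+2) - A (al j.+1)) *m Z (ta j.+1).
    by rewrite /KS_sum big_ord_recl /= ta0 Zts mulmx0 add0r.
  have vs : vsum A k' (fun j => al j.+1) <= ev.
    case: k' hdiv hf k0 hS hdivk hdivj mono ta0 hsum => [|k'] hdiv hf k0 hS hdivk hdivj mono ta0 hsum.
      by rewrite /vsum /dsum big_ord0 ltW.
    apply: ltW; apply: (hv (al 1%N) y) => //.
    - by rewrite -hdiv0; have [] := hdivj 0%N (ltn0Sn _).
    - rewrite -hdivk; apply: lt_le_trans (mono 2%N k'.+2 _); first by have [] := hdivj 1%N isT.
      by apply/andP; split => //.
    - split => //; split => // j jk; have [h _] := hdivj j.+1 jk; by rewrite h lexx ltW.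
  have hSn : mxnorm (KS_sum A Z k'.+1 al ta) <= B / 2.
    rewrite hsum; apply: le_trans (mxnorm_sum _) _.
    apply: le_trans (_ : _ <= \sum_(j < k') n%:R * B * mxnorm (A (al j.+2) - A (al j.+1))) _.
      apply: ler_sum => j _; apply: le_trans (mxnormM _ _) _.
      rewrite [n%:R * B * _]mulrAC ler_wpM2l ?mulr_ge0 ?mxnorm_ge0 //.
      have [_ /andP [t1' t2']] := hdivj j.+1 (ltn_ord j).
      apply: hB.
        by rewrite -hdiv0; apply: le_trans t1'; apply: mono; rewrite /= ltnS ltnW.
      apply: le_trans yt1; apply: le_trans t2' _; rewrite -hdivk; apply: mono.
      by rewrite leqnn andbT ltnS ltn_ord.
    rewrite -mulr_sumr.
    apply: le_trans (_ : n%:R * B * ev <= _).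
      by rewrite ler_wpM2l ?mulr_ge0 //.
    by rewrite mulrAC [B / 2]mulrC ler_wpM2r.
  have -> : Z y = - (KS_sum A Z k'.+1 al ta - Z y) + KS_sum A Z k'.+1 al ta.
    by rewrite opprB addrNK.
  apply: le_trans (mxnormD _ _) _; rewrite mxnormN addrC; apply: lerD => //; exact: ltW.
have B00 : 0 <= B0 by apply: le_trans (Zb (lexx r)); apply: mxnorm_ge0.
have iter : forall m, forall y, ts <= y -> y <= t1 -> mxnorm (Z y) <= B0 / 2%:R ^+ m.
  elim=> [|m IH] y tsy yt1.
    by rewrite expr0 invr1 mulr1; apply: Zb; apply: le_trans tsy.
  rewrite exprSr invfM mulrA; apply: half => //.
  by rewrite divr_ge0 // exprn_ge0.
move=> y tsy yt1; apply: mxnorm_small => e e0.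
have [N hN] := big_N B0 e0.
apply: le_trans (iter N y tsy yt1) _.
rewrite ler_pdivrMr ?exprn_gt0 //; apply: le_trans (ltW hN) _.
rewrite mulrC ler_wpM2l ?(ltW e0) // -natrX ler_nat ltnW // ltn_expl //.
Qed.

Lemma Z_zero t : r <= t -> Z t = 0.
Proof.
move=> rt; case: (eqVneq (Z t) 0) => // Znz; exfalso.
pose S : set R := fun x => r <= x <= t /\ forall u, r <= u -> u <= x -> Z u = 0.
have Sr : S r.
  split; first by rewrite lexx rt.
  move=> u h1 h2; have -> : u = r by apply/eqP; rewrite eq_le h1 h2.
  exact: Zr.
have hs : has_sup S by split; [exists r | exists t => x [/andP [_ ->]]].
set c := sup S.
have rc : r <= c by apply: sup_upper_bound.
have ct : c <= t by apply: ge_sup; [exists r | move=> x [/andP [_ ->]]].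
have below : forall u, r <= u -> u < c -> Z u = 0.
  move=> u ru uc; have uc0 : 0 < c - u by rewrite subr_gt0.
  have [x [_ hx] cx] := sup_adherent uc0 hs.
  apply: hx => //; move: cx; rewrite /c; set cc := sup S => cx; lra.
have Zc : Z c = 0.
  case: (eqVneq c r) => [->|cr]; first exact: Zr.
  apply: stepL; last exact: below.
  by rewrite lt_neqAle eq_sym cr rc.
have ct' : c < t.
  rewrite lt_neqAle ct andbT; apply/negP => /eqP ctE; move: Znz; rewrite -ctE Zc eqxx //.
have [t1 [ct1 h1]] := stepR rc Zc.
set tau := Num.min t1 t.
have ctau : c < tau by rewrite lt_min ct1 ct'.
have Stau : S tau.
  split.
    rewrite ge_min lexx orbT andbT; apply: le_trans rc (ltW ctau).
  move=> u ru utau; case: (ltP u c) => uc; first exact: below.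
  apply: h1 => //; apply: le_trans utau _; rewrite ge_min lexx //.
have : tau <= c by apply: sup_upper_bound.
by rewrite leNgt ctau.
Qed.

End Uniq.
Section Main.
Variable R : realType.
Variable n : nat.
Variable A : R -> 'M[R]_n.
Variable U : R -> R -> 'M[R]_n.
Hypothesis BV : locally_BV_J A.
Hypothesis hL : forall t : R, 0 < t -> forall L : 'M[R]_n, left_limit A t L ->
     1%:M - (A t - L) \in unitmx.
Hypothesis TM : transition_matrix A U.

Lemma U_diag s : 0 <= s -> U s s = 1%:M.
Proof. by move=> s0; have [_ h _] := TM s0 s0; apply/eqP; rewrite -subr_eq0 h. Qed.

Lemma U_int s u v : 0 <= s -> s <= u -> u < v ->
  KS_integral u v A (fun r => U r s) (U v s - U u s).
Proof.
move=> s0 su uv.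
have v0 : 0 <= v by apply: le_trans (ltW uv); apply: le_trans su.
have u0 : 0 <= u by apply: le_trans su.
case: (eqVneq s u) => [e|snu].
  subst u; rewrite U_diag //; have [h _ _] := TM v0 s0; exact: (h uv).
have su' : s < u by rewrite lt_neqAle snu su.
have [h1 _ _] := TM v0 s0; have [h2 _ _] := TM u0 s0.
have := KS_split su' uv (h1 (lt_trans su' uv)) (h2 su').
by rewrite -zsub4 subrr subr0.
Qed.

Lemma mxnorm_col_bound (M : 'M[R]_n) (d e : R) : 0 < d ->
  (forall x0 : 'cV[R]_n, mxnorm x0 < d -> mxnorm (M *m x0) < e) ->
  mxnorm M <= 2 * e / d.
Proof.
move=> d0 h.
have d2 : 0 < d / 2 by rewrite divr_gt0.
case: (ltP 0 e) => e0; last first.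
  have := h 0; rewrite mxnorm0 mulmx0 mxnorm0 => /(_ d0); rewrite ltNge e0 //.
apply: mxnorm_le; first by rewrite divr_ge0 ?mulr_ge0 ?ltW.
move=> i j.
pose x0 : 'cV[R]_n := (d / 2) *: delta_mx j 0.
have hx : mxnorm x0 < d.
  apply: le_lt_trans (_ : mxnorm x0 <= d / 2) _; last by rewrite ltr_pdivrMr // ltr_pMr // ltr1n.
  apply: mxnorm_le; first exact: ltW.
  move=> i' j'; rewrite !mxE normrM ger0_norm ?(ltW d2) // ler_piMr ?(ltW d2) //.
  by case: (_ && _); rewrite ?normr1 ?normr0.
have := h _ hx; rewrite /x0 -scalemxAr -colE => hh.
have : `|M i j| * (d / 2) < e.
  apply: le_lt_trans hh; have := le_mxnorm ((d / 2) *: col j M) i 0.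
  by rewrite !mxE normrM ger0_norm ?(ltW d2) // mulrC.
rewrite -ltr_pdivlMr // => /ltW.
rewrite (_ : e / (d / 2) = 2 * e / d) //.
field; rewrite ?gt_eqF //.
Qed.
Lemma cocycle (C : R) : (forall t s, 0 <= s -> s <= t -> mxnorm (U t s) <= C) ->
  forall s r t, 0 <= s -> s <= r -> r <= t -> U t s = U t r *m U r s.
Proof.
move=> hC s r t s0 sr rt.
have r0 : 0 <= r by apply: le_trans sr.
pose Z x := U x s - U x r *m U r s.
have Zr : Z r = 0 by rewrite /Z U_diag // mul1mx subrr.
have Zint : forall u v, r <= u -> u < v -> KS_integral u v A Z (Z v - Z u).
  move=> u v ru uv.
  have h1 := U_int s0 (le_trans sr ru) uv.
  have h2 := KS_mulr (U r s) (U_int r0 ru uv).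
  have := KS_sub h1 h2; rewrite mulmxBl zsub4 //.
have Zb : forall x, r <= x -> mxnorm (Z x) <= C + n%:R * C * C.
  move=> x rx; apply: le_trans (mxnormB _ _) _; apply: lerD.
    by apply: hC => //; apply: le_trans rx.
  apply: le_trans (mxnormM _ _) _.
  have C0 : 0 <= C by apply: le_trans (hC r r r0 (lexx r)); apply: mxnorm_ge0.
  apply: ler_pM; rewrite ?mulr_ge0 ?mxnorm_ge0 //; last exact: hC.
  by rewrite ler_wpM2l // hC.
have := Z_zero BV hL r0 Zr Zint Zb rt.
by move/eqP; rewrite subr_eq0 => /eqP.
Qed.

End Main.
Unset Implicit Arguments.
Set Strict Implicit.
Theorem theorem3p7 (R : realType) (n : nat) (A : R -> 'M[R]_n)
  (U : R -> R -> 'M[R]_n) :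
  locally_BV_J A ->
  (forall t : R, 0 < t -> forall L : 'M[R]_n, left_limit A t L ->
     1%:M - (A t - L) \in unitmx) ->
  (forall t : R, 0 <= t -> forall L : 'M[R]_n, right_limit A t L ->
     1%:M + (L - A t) \in unitmx) ->
  transition_matrix A U ->
  (unif_asymp_stable U <->
   exists alpha K : R, 0 < alpha /\ 0 < K /\
     forall t s0 : R, 0 <= s0 -> s0 <= t ->
       mxnorm (U t s0) <= K * expR (- alpha * (t - s0))).
Proof.
move=> BV hL hR TM; split.
- move=> [US [d0 [d0p att]]].
  have [d1 [d1p h1]] := US 1 ltr01.
  set C : R := 2 * 1 / d1.
  have C0 : 0 < C by rewrite divr_gt0 // mulr_gt0.
  have hC : forall t s, 0 <= s -> s <= t -> mxnorm (U t s) <= C.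
    move=> t s s0 st; apply: mxnorm_col_bound d1p _ => x0 hx; exact: h1 s x0 s0 hx t st.
  set q : R := (2 * (n%:R + 1))^-1.
  have q0 : 0 < q by rewrite invr_gt0 mulr_gt0 // ltr_wpDl.
  have nq : n%:R * q <= 2^-1.
    rewrite /q invfM mulrCA ler_piMr ?invr_ge0 ?ler0n //.
    by rewrite ler_pdivrMr ?ltr_wpDl // mul1r lerDl.
  have e0 : 0 < q * d0 / 2 by rewrite divr_gt0 // mulr_gt0.
  have [T [T0 hT]] := att _ e0.
  set T' := T + 1.
  have T'0 : 0 < T' by rewrite ltr_wpDl.
  have hq : forall s t, 0 <= s -> s + T' <= t -> mxnorm (U t s) <= q.
    move=> s t s0 st.
    have sT : s + T <= t by apply: le_trans st; rewrite lerD2l lerDl.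
    have := mxnorm_col_bound (M := U t s) d0p (fun x0 hx => hT s x0 s0 hx t sT).
    rewrite (_ : 2 * (q * d0 / 2) / d0 = q) //; field; rewrite gt_eqF //.
  have dec : forall k : nat, forall s t, 0 <= s -> s + k%:R * T' <= t ->
      mxnorm (U t s) <= C / 2 ^+ k.
    elim=> [|k IH] s t s0 st.
      rewrite expr0 invr1 mulr1; apply: hC => //; move: st; rewrite mul0r addr0 //.
    set r := s + T'.
    have sr : s <= r by rewrite lerDl ltW.
    have kT : 0 <= k%:R * T' by rewrite mulr_ge0 // ltW.
    have rkt : r + k%:R * T' <= t.
      by apply: le_trans st; rewrite /r -addrA lerD2l -natr1 mulrDl mul1r addrC.
    have rt : r <= t by apply: le_trans rkt; rewrite lerDl.
    rewrite (cocycle BV hL TM hC s0 sr rt).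
    apply: le_trans (mxnormM _ _) _.
    have h1' := IH r t (le_trans s0 sr) rkt.
    have h2' := hq s r s0 (lexx _).
    apply: le_trans (_ : n%:R * (C / 2 ^+ k) * q <= _).
      by apply: ler_pM; rewrite ?mulr_ge0 ?mxnorm_ge0 // ler_wpM2l.
    rewrite mulrAC.
    have -> : C / 2 ^+ k.+1 = 2^-1 * (C / 2 ^+ k) by rewrite exprS invfM mulrCA.
    by rewrite ler_wpM2r // divr_ge0 ?exprn_ge0 // ltW.
  exists (ln 2 / T'), (2 * C); split; first by rewrite divr_gt0 // ln_gt0 // ltr1n.
  split; first by rewrite mulr_gt0.
  move=> t s s0 st.
  set x := (t - s) / T'.
  have x0 : 0 <= x by rewrite divr_ge0 ?subr_ge0 // ltW.
  have /andP [kx xk] := truncn_itv x0.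
  set k := Num.truncn x in kx xk.
  apply: le_trans (dec k s t s0 _) _.
    rewrite -lerBrDl; move: kx; rewrite /x ler_pdivlMr //.
  have -> : - (ln 2 / T') * (t - s) = (k.+1)%:R * (- ln 2) + (ln 2 * ((k.+1)%:R - x)).
    rewrite /x; field; rewrite gt_eqF //.
  rewrite expRD expRM_natl expRN lnK ?posrE // exprVn.
  apply: le_trans (_ : 2 * C * (2 ^- k.+1 * 1) <= _).
    by rewrite mulr1 exprS invfM mulrA [2 * C * _]mulrAC divff // mul1r.
  apply: ler_wpM2l; first by rewrite mulr_ge0 // ltW.
  apply: ler_wpM2l; first by rewrite invr_ge0 exprn_ge0.
  apply: le_trans (expR_ge1Dx _); rewrite lerDl mulr_ge0 // ?subr_ge0 ?ltW //.
  by rewrite ln_gt0 // ltr1n.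
- move=> [a [K [a0 [K0 hK]]]].
  have hK1 : forall t s, 0 <= s -> s <= t -> mxnorm (U t s) <= K.
    move=> t s s0 st; apply: le_trans (hK t s s0 st) _.
    rewrite ger_pMr // expR_le1 mulNr oppr_le0 mulr_ge0 ?subr_ge0 // (ltW a0) //.
  have nK0 : 0 <= n%:R * K by rewrite mulr_ge0 // (ltW K0).
  split.
  + move=> e e0; exists (e / (n%:R * K + 1)); split; first by rewrite divr_gt0 // ltr_wpDl.
    move=> s x0 s0 hx t st; rewrite /sol; apply: le_lt_trans (mxnormM _ _) _.
    apply: (@le_lt_trans _ _ (n%:R * K * mxnorm x0)).
      apply: ler_wpM2r; first exact: mxnorm_ge0.
      by apply: ler_wpM2l => //; apply: hK1.
    move: hx; rewrite ltr_pdivlMr ?ltr_wpDl // => hx; apply: le_lt_trans hx.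
    rewrite mulrC; apply: ler_wpM2l; first exact: mxnorm_ge0.
    by rewrite lerDl.
  + exists 1; split => // e e0.
    set c := n%:R * K + 1.
    have c0 : 0 < c by rewrite ltr_wpDl.
    exists (c / (e * a)); split; first by rewrite divr_ge0 ?mulr_ge0 // ltW.
    move=> s x0 s0 hx t st; rewrite /sol.
    have cea : 0 <= c / (e * a) by rewrite divr_ge0 ?mulr_ge0 // ltW.
    have st' : s <= t by lra.
    set E := expR (a * (t - s)).
    have E0 : 0 < E := expR_gt0 _.
    have hE : c / e < E.
      have h1 := expR_ge1Dx (a * (t - s)).
      have h2 : c / e <= a * (t - s).
        have h3 : c / (e * a) <= t - s by lra.
        have := ler_wpM2l (ltW a0) h3.
        rewrite (_ : a * (c / (e * a)) = c / e) //; field; rewrite !gt_eqF //.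
      rewrite /E; lra.
    apply: le_lt_trans (mxnormM _ _) _.
    apply: (@le_lt_trans _ _ (n%:R * (K * E^-1) * 1)).
      apply: ler_pM.
      - by rewrite mulr_ge0 ?mxnorm_ge0.
      - exact: mxnorm_ge0.
      - apply: ler_wpM2l => //; have := hK t s s0 st'; by rewrite mulNr expRN.
      - exact: ltW.
    rewrite mulr1 mulrA ltr_pdivrMr //.
    move: hE; rewrite ltr_pdivrMr // /c => hE; lra.
Qed.
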